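(* Let $L$ be a $\kappa$-frame. Every congruence $C\in\mathbb{C}L$ is a meet of clear congruences; namely $C=\bigwedge\{\partial_I\mid I\in\mathfrak{H}_\kappa L,\ \partial_I\ge C\}$.
   Context: $\kappa$ is a fixed regular cardinal; a $\kappa$-frame is a bounded distributive lattice having joins of all subsets of cardinality $<\kappa$ and satisfying the frame distributive law for such joins. A $\kappa$-ideal is a downset in which every subset of cardinality $<\kappa$ has an upper bound; $\mathfrak{H}_\kappa L$ is the set of $\kappa$-ideals. A congruence is an equivalence relation that is a sub-$\kappa$-frame of $L\times L$; $\mathbb{C}L$ is the frame of congruences under inclusion. For a $\kappa$-ideal $I$, $\partial_I=\{(a,b)\in L\times L\mid \forall x\in L:\ a\wedge x\in I\iff b\wedge x\in I\}$; a congruence is clear if it equals $\partial_I$ for some $\kappa$-ideal $I$. *)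

(* Defs.v *)
Set Implicit Arguments.

(** * Cardinals below a regular cardinal kappa.
    kappa is represented by a carrier type [K]; a type [A] has cardinality
    < kappa iff it injects into K but K does not inject into A. *)

Definition injective {A B : Type} (f : A -> B) : Prop :=
  forall x y, f x = f y -> x = y.

Definition small_type (K : Type) (A : Type) : Prop :=
  (exists f : A -> K, injective f) /\ ~ (exists g : K -> A, injective g).

Definition small_set (K : Type) {X : Type} (S : X -> Prop) : Prop :=
  small_type K {x : X | S x}.

Definition regular_card (K : Type) : Prop :=
  (exists f : nat -> K, injective f) /\
  (forall (X A : Type) (F : A -> X -> Prop),
      small_type K A -> (forall a, small_set K (F a)) ->
      small_set K (fun x => exists a, F a x)).

Definition is_lub {L : Type} (le : L -> L -> Prop) (S : L -> Prop) (x : L) : Prop :=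
  (forall s, S s -> le s x) /\ (forall u, (forall s, S s -> le s u) -> le x u).

Record kframe (K : Type) (L : Type) := KFrame {
  le : L -> L -> Prop;
  meet : L -> L -> L;
  top : L;
  bot : L;
  le_refl : forall a, le a a;
  le_trans : forall a b c, le a b -> le b c -> le a c;
  le_antisym : forall a b, le a b -> le b a -> a = b;
  top_max : forall a, le a top;
  bot_min : forall a, le bot a;
  meet_glb : forall a b c, le c (meet a b) <-> (le c a /\ le c b);
  small_join : forall S : L -> Prop, small_set K S -> exists x, is_lub le S x;
  distr : forall (a : L) (S : L -> Prop) (x : L), small_set K S -> is_lub le S x ->
            is_lub le (fun y => exists s, S s /\ y = meet a s) (meet a x)
}.

Arguments le {K L} _ _ _.
Arguments meet {K L} _ _ _.
Arguments top {K L} _.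
Arguments bot {K L} _.

Definition kideal {K L : Type} (F : kframe K L) (I : L -> Prop) : Prop :=
  (forall a b, le F a b -> I b -> I a) /\
  (forall S : L -> Prop, small_set K S -> (forall s, S s -> I s) ->
      exists u, I u /\ forall s, S s -> le F s u).

(** Congruences: equivalence relations that are sub-kappa-frames of L x L
    (order, meets, top, bottom and small joins in L x L are componentwise). *)
Definition congruence {K L : Type} (F : kframe K L) (C : L -> L -> Prop) : Prop :=
  (forall a, C a a) /\
  (forall a b, C a b -> C b a) /\
  (forall a b c, C a b -> C b c -> C a c) /\
  C (top F) (top F) /\ C (bot F) (bot F) /\
  (forall a b c d, C a b -> C c d -> C (meet F a c) (meet F b d)) /\
  (forall (S : L * L -> Prop) (x y : L),
      small_set K S -> (forall p, S p -> C (fst p) (snd p)) ->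
      is_lub (le F) (fun a => exists p, S p /\ a = fst p) x ->
      is_lub (le F) (fun b => exists p, S p /\ b = snd p) y ->
      C x y).

Definition subrel {L : Type} (C D : L -> L -> Prop) : Prop :=
  forall a b, C a b -> D a b.

Definition partial_rel {K L : Type} (F : kframe K L) (I : L -> Prop) : L -> L -> Prop :=
  fun a b => forall x, I (meet F a x) <-> I (meet F b x).

Definition is_cong_meet {K L : Type} (F : kframe K L)
  (P : (L -> L -> Prop) -> Prop) (C : L -> L -> Prop) : Prop :=
  congruence F C /\
  (forall D, P D -> subrel C D) /\
  (forall E, congruence F E -> (forall D, P D -> subrel E D) -> subrel E C).

(* Main.v *)
Require Import Defs.
From Stdlib Require Import ClassicalEpsilon ProofIrrelevance.

Lemma small_img (K X Y : Type) (f : X -> Y) (S : X -> Prop) :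
  small_set K S -> small_set K (fun y => exists x, S x /\ y = f x).
Proof.
  intros [[i hi] hn].
  set (T := fun y => exists x, S x /\ y = f x).
  assert (pick : forall y : {y | T y}, {x | S x /\ proj1_sig y = f x}).
  { intros [y hy]. apply constructive_indefinite_description. exact hy. }
  set (pre := fun y : {y | T y} => exist S (proj1_sig (pick y)) (proj1 (proj2_sig (pick y)))).
  assert (hpre : injective pre).
  { intros y1 y2 e. apply (f_equal (@proj1_sig _ _)) in e. unfold pre in e. simpl in e.
    destruct (pick y1) as [x1 [s1 q1]]. destruct (pick y2) as [x2 [s2 q2]].
    simpl in e. subst x2. apply eq_sig_hprop; [intros; apply proof_irrelevance|]. congruence. }
  split.
  - exists (fun y => i (pre y)). intros a b e. apply hpre, hi, e.
  - intros [g hg]. apply hn. exists (fun k => pre (g k)). intros a b e. apply hg, hpre, e.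
Qed.

Lemma is_lub_ext {L : Type} (le : L -> L -> Prop) (A B : L -> Prop) x :
  (forall s, A s <-> B s) -> is_lub le A x -> is_lub le B x.
Proof.
  intros h [h1 h2]. split.
  - intros s hs. apply h1, h, hs.
  - intros u hu. apply h2. intros s hs. apply hu, h, hs.
Qed.

Section Fr.
Variables (K L : Type) (F : kframe K L).

Lemma m_l a b : le F (meet F a b) a.
Proof. pose proof (proj1 (meet_glb F a b (meet F a b)) (le_refl F _)). tauto. Qed.
Lemma m_r a b : le F (meet F a b) b.
Proof. pose proof (proj1 (meet_glb F a b (meet F a b)) (le_refl F _)). tauto. Qed.
Lemma m_comm a b : meet F a b = meet F b a.
Proof. apply (le_antisym F); apply (meet_glb F); split; auto using m_l, m_r. Qed.
Lemma m_assoc a b c : meet F (meet F a b) c = meet F a (meet F b c).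
Proof.
  apply (le_antisym F); apply (meet_glb F); split.
  - eapply (le_trans F); [apply m_l|apply m_l].
  - apply (meet_glb F); split; [eapply (le_trans F); [apply m_l|apply m_r]|apply m_r].
  - apply (meet_glb F); split; [apply m_l|eapply (le_trans F); [apply m_r|apply m_l]].
  - eapply (le_trans F); [apply m_r|apply m_r].
Qed.
Lemma m_le a b : le F a b -> meet F a b = a.
Proof. intro h. apply (le_antisym F); [apply m_l|apply (meet_glb F); split; auto using (le_refl F)]. Qed.
Lemma m_idem a : meet F a a = a.
Proof. apply m_le, (le_refl F). Qed.
Lemma m_top a : meet F a (top F) = a.
Proof. apply m_le, top_max. Qed.
End Fr.
Arguments m_l {K L} F a b. Arguments m_r {K L} F a b. Arguments m_comm {K L} F a b.
Arguments m_assoc {K L} F a b c. Arguments m_le {K L} F {a b} _.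
Arguments m_idem {K L} F a. Arguments m_top {K L} F a.
Arguments small_img {K X Y} f {S} _.

Theorem mainTheorem10 (K : Type) (hK : regular_card K) (L : Type) (F : kframe K L)
  (C : L -> L -> Prop) (hC : congruence F C) :
  (* each partial_I is a congruence (so is an element of CL) ... *)
  (forall I, kideal F I -> congruence F (partial_rel F I)) /\
  (* ... and C is the meet in CL of the clear congruences above it *)
  is_cong_meet F
    (fun D => exists I, kideal F I /\ D = partial_rel F I /\ subrel C (partial_rel F I))
    C.
Proof.
  split.
  - intros I [hdown hup].
    assert (dir : forall (S : L * L -> Prop) (f g : L * L -> L) x y,
      small_set K S -> (forall p, S p -> forall z, I (meet F (f p) z) -> I (meet F (g p) z)) ->
      is_lub (le F) (fun a => exists p, S p /\ a = f p) x ->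
      is_lub (le F) (fun b => exists p, S p /\ b = g p) y ->
      forall z, I (meet F x z) -> I (meet F y z)).
    { intros S f g x y hS hfg hx hy z hz.
      pose proof (small_img g hS) as hB.
      pose proof (distr F z hB hy) as hd.
      pose proof (small_img (meet F z) hB) as hB2.
      destruct (hup _ hB2) as [u [hu hub]].
      { intros w [s [[p [hp ->]] ->]]. rewrite m_comm. apply (hfg p hp).
        eapply hdown; [|exact hz]. apply (meet_glb F); split; [|apply m_r].
        eapply (le_trans F); [apply m_l|]. apply (proj1 hx). eauto. }
      rewrite m_comm. eapply hdown; [|exact hu]. apply (proj2 hd). exact hub. }
    unfold congruence, partial_rel. split; [|split; [|split; [|split; [|split; [|split]]]]].
    + tauto.
    + intros a b h x. specialize (h x). tauto.
    + intros a b c h1 h2 x. specialize (h1 x); specialize (h2 x). tauto.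
    + tauto.
    + tauto.
    + intros a b c d H H0 x. rewrite !m_assoc. split; intro h.
      * apply H. rewrite <- m_assoc, (m_comm F a d), m_assoc. apply H0.
        rewrite <- m_assoc, (m_comm F c a), m_assoc. exact h.
      * apply H. rewrite <- m_assoc, (m_comm F b c), m_assoc. apply H0.
        rewrite <- m_assoc, (m_comm F d b), m_assoc. exact h.
    + intros S x y hS H0 hx hy z. split.
      * apply (dir S fst snd x y); auto. intros p hp z'; apply H0, hp.
      * apply (dir S snd fst y x); auto. intros p hp z'; apply H0, hp.
  - destruct hC as [crefl [csym [ctrans [ctop [cbot [cmeet cjoin]]]]]].
    split; [repeat split; auto|]. split.
    + intros D [I [_ [-> h]]]. exact h.
    + intros E _ hE a b hab.
      set (Ic := fun c x => C (meet F x c) x).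
      assert (hid : forall c, kideal F (Ic c)).
      { intro c; split.
        - intros y x hyx hx. unfold Ic in *.
          rewrite <- (m_le F hyx) at 1. rewrite m_assoc.
          pose proof (cmeet y y _ _ (crefl y) hx) as h. rewrite (m_le F hyx) in h. exact h.
        - intros S hS hall. destruct (small_join F hS) as [u hu].
          exists u; split; [|apply hu].
          unfold Ic. apply (cjoin (fun p => exists s, S s /\ p = (meet F s c, s))).
          + apply (small_img (fun s => (meet F s c, s)) hS).
          + intros p [s [hs ->]]. apply hall, hs.
          + rewrite (m_comm F u c). eapply is_lub_ext; [|exact (distr F c hS hu)].
            intro w; split.
            * intros [s [hs ->]]. exists (meet F s c, s). split; eauto. simpl. apply m_comm.
            * intros [p [[s [hs ->]] ->]]. exists s. split; auto. apply m_comm.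
          + eapply is_lub_ext; [|exact hu]. intro w; split.
            * intros hw. exists (meet F w c, w). eauto.
            * intros [p [[s [hs ->]] ->]]. exact hs. }
      assert (hsub : forall c, subrel C (partial_rel F (Ic c))).
      { intros c x y hxy z. unfold Ic.
        pose proof (cmeet _ _ _ _ hxy (crefl z)) as h1.
        pose proof (cmeet _ _ _ _ h1 (crefl c)) as h2.
        split; intro h; eauto. }
      assert (ha : partial_rel F (Ic a) a b).
      { apply (hE _ (ex_intro _ (Ic a) (conj (hid a) (conj eq_refl (hsub a))))). exact hab. }
      assert (hb : partial_rel F (Ic b) a b).
      { apply (hE _ (ex_intro _ (Ic b) (conj (hid b) (conj eq_refl (hsub b))))). exact hab. }
      specialize (ha (top F)); specialize (hb (top F)).
      rewrite !m_top in ha, hb. unfold Ic in ha, hb.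
      assert (h1 : C (meet F b a) b) by (apply ha; rewrite m_idem; auto).
      assert (h2 : C (meet F a b) a) by (apply hb; rewrite m_idem; auto).
      rewrite m_comm in h1. eauto.
Qed.
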